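(* Let $\eta(v,w)=v^0w^0-v^1w^1-\dots-v^nw^n$ on $\mathbb{R}^{n+1}$ and let $h$ be a symmetric bilinear form on $\mathbb{R}^{n+1}$ of Lorentzian signature $(+,-,\dots,-)$. Let $C_h$ be one of the two connected components of $\{v: h(v,v)>0\}$ and set $$\mathcal{T}=\{v\in\mathbb{R}^{n+1}: \eta(v,v)>0,\ v^0>0\}\cap C_h,$$ assumed nonempty. Define $F:\mathcal{T}\to(0,\infty)$ by $F(v)=[\eta(v,v)\,h(v,v)]^{1/4}$. Then for all $v,w\in\mathcal{T}$, $$\frac12\left(\frac{\eta(w,v)}{\eta(v,v)}+\frac{h(w,v)}{h(v,v)}\right)\ge\frac{F(w)}{F(v)}.$$ *)

(* Defs.v *)
From HB Require Import structures.
From mathcomp Require Import all_boot all_order all_algebra.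
From mathcomp Require Import all_classical all_reals all_analysis.
Set Implicit Arguments. Unset Strict Implicit. Unset Printing Implicit Defensive.
Import Order.TTheory GRing.Theory Num.Theory.
Import numFieldNormedType.Exports.
Local Open Scope ring_scope.
Local Open Scope classical_set_scope.

Definition bform (R : realType) (n : nat) (A : 'M[R]_n) (v w : 'rV[R]_n) : R :=
  (v *m A *m w^T) 0 0.

Definition etaM (R : realType) (n : nat) : 'M[R]_n.+1 :=
  diag_mx (\row_(i < n.+1) if i == ord0 then 1 else -1).

Definition etaL (R : realType) (n : nat) (v w : 'rV[R]_n.+1) : R :=
  bform (etaM R n) v w.

(* H is symmetric of Lorentzian signature (+,-,...,-):
   congruent (Sylvester) to diag(1,-1,...,-1) *)
Definition lorentzian (R : realType) (n : nat) (H : 'M[R]_n.+1) : Prop :=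
  H^T = H /\ exists P : 'M[R]_n.+1, P \in unitmx /\ H = P^T *m etaM R n *m P.

Definition Tset (R : realType) (n : nat) (C : set 'rV[R]_n.+1) : set 'rV[R]_n.+1 :=
  [set v | 0 < etaL v v /\ 0 < v 0 ord0] `&` C.

Definition Ffun (R : realType) (n : nat) (H : 'M[R]_n.+1) (v : 'rV[R]_n.+1) : R :=
  (etaL v v * bform H v v) `^ (4%:R^-1).

(* Main.v *)
Require Import Defs.
From HB Require Import structures.
From mathcomp Require Import all_boot all_order all_algebra.
From mathcomp Require Import all_classical all_reals all_analysis.
From mathcomp Require Import ring lra.
Import Order.TTheory GRing.Theory Num.Theory.
Import numFieldNormedType.Exports.
Local Open Scope ring_scope.
Local Open Scope classical_set_scope.

Lemma etaE (R : realType) n (v w : 'rV[R]_n.+1) :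
  etaL v w = v 0 0 * w 0 0 - \sum_(i < n) v 0 (lift ord0 i) * w 0 (lift ord0 i).
Proof.
rewrite /etaL /bform /etaM mul_mx_diag !mxE big_ord_recl !mxE eqxx /= mulr1.
rewrite -sumrN; congr (_ + _); apply: eq_bigr => i _; rewrite !mxE.
by rewrite (_ : (lift ord0 i == ord0) = false) //= mulrN1 mulNr.
Qed.

Lemma etaC (R : realType) n (v w : 'rV[R]_n.+1) : etaL v w = etaL w v.
Proof. rewrite !etaE mulrC; congr (_ - _); apply: eq_bigr => i _; exact: mulrC. Qed.

Lemma bform_eta (R : realType) n (P : 'M[R]_n.+1) v w :
  bform (P^T *m etaM R n *m P) v w = etaL (v *m P^T) (w *m P^T).
Proof. by rewrite /etaL /bform trmx_mul trmxK !mulmxA. Qed.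

Lemma key (R : realType) (a0 t Sa Sb D : R) : 0 <= Sb - 2*t*D + t^+2*Sa ->
  0 < a0^+2 - Sa -> 0 < (t*a0)^+2 - Sb -> 0 < t ->
  0 < a0*(t*a0) - D /\ (a0^+2 - Sa)*((t*a0)^+2-Sb) <= (a0*(t*a0) - D)^+2.
Proof.
move=> hq hA hC ht.
set A := a0^+2 - Sa; set C := (t*a0)^+2 - Sb; set B := a0*(t*a0) - D.
have hC' : 0 < C := hC. have hA' : 0 < A := hA.
have E : C - 2*t*B + t^+2*A = - (Sb - 2*t*D + t^+2*Sa) by rewrite /A /B /C; ring.
have tA : 0 <= t^+2 * A by rewrite mulr_ge0 ?sqr_ge0 ?ltW.
have h2 : 0 < t * (2 * B).
  have -> : t * (2*B) = 2*t*B by ring.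
  lra.
split; first by move: h2; rewrite pmulr_rgt0 // => ?; lra.
have : A * (C - 2*t*B + t^+2*A) <= 0 by rewrite E; nra.
have := sqr_ge0 (A*t - B). nra.
Qed.

Lemma sq_expand (R : realType) n (a b : 'I_n -> R) t :
  \sum_i (b i - t * a i)^+2 = \sum_i b i * b i - 2*t*(\sum_i a i * b i) + t^+2 * \sum_i a i * a i.
Proof.
rewrite !mulr_sumr -sumrB -big_split /=; apply: eq_bigr => i _; ring.
Qed.

Lemma revCS (R : realType) n (a b : 'rV[R]_n.+1) :
  0 < etaL a a -> 0 < etaL b b -> 0 < a 0 0 * b 0 0 ->
  0 < etaL a b /\ etaL a a * etaL b b <= etaL a b ^+ 2.
Proof.
rewrite !etaE => hA hC hab.
have a0n : a 0 0 != 0 by apply: contraTneq hab => ->; rewrite mul0r ltxx.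
set t := b 0 0 / a 0 0.
have bt : b 0 0 = t * a 0 0 by rewrite /t divfK.
have ht : 0 < t by move: hab; rewrite bt; nra.
have hq := @sq_expand _ _ (fun i => a 0 (lift ord0 i)) (fun i => b 0 (lift ord0 i)) t.
have hq0 : 0 <= \sum_i (b 0 (lift ord0 i) - t * a 0 (lift ord0 i))^+2.
  by apply: sumr_ge0 => i _; exact: sqr_ge0.
rewrite hq in hq0.
move: hA hC; rewrite bt -!expr2 => hA hC.
have := @key _ _ _ _ _ _ hq0 hA hC ht.
by rewrite (eq_bigr (fun i => b 0 (lift ord0 i) * a 0 (lift ord0 i))) // => i _; rewrite mulrC.
Qed.

Lemma g_cont (R : realType) n (M : 'M[R]_n.+1) :
  continuous (fun u : 'rV[R]_n.+1 => (u *m M) 0 0).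
Proof.
have -> : (fun u : 'rV[R]_n.+1 => (u *m M) 0 0) =
   (fun u => \sum_(j <- index_enum 'I_n.+1 | true) (fun j (u : 'rV[R]_n.+1) => u 0 j * M j 0) j u).
  by apply: funext => u; rewrite mxE.
apply: continuous_big; first exact: add_continuous.
move=> j _ x /=.
exact: (continuousM (@coord_continuous R 1 n.+1 0 j x) (@cst_continuous _ _ (M j 0) x)).
Qed.

Lemma comp_sign (R : realType) n (P : 'M[R]_n.+1) (x0 y : 'rV[R]_n.+1) :
  @connected_component ('rV[R]_n.+1 : topologicalType)
     [set v | 0 < bform (P^T *m etaM R n *m P) v v] x0 y ->
  0 < (y *m P^T) 0 0 * (x0 *m P^T) 0 0.
Proof.
set S := [set v | _]; set C := connected_component S x0 => Cy.
set g := fun u : 'rV[R]_n.+1 => (u *m P^T) 0 0.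
have nz : forall u, S u -> g u != 0.
  move=> u; rewrite /S /= bform_eta etaE => hu; apply/eqP => g0.
  move: hu; rewrite /g in g0; rewrite g0 mul0r sub0r oppr_gt0 ltNge.
  by rewrite sumr_ge0 // => i _; rewrite -expr2 sqr_ge0.
have Sx0 : S x0 by case: Cy => B [Bx0 BS _] _; exact: BS.
have Cx0 : C x0 by exact: connected_component_refl.
have I : is_interval (g @` C).
  apply/connected_intervalP; apply: connected_continuous_connected.
    exact: component_connected.
  by apply: continuous_subspaceT; exact: g_cont.
rewrite ltNge; apply/negP => hle.
have hle' : g y * g x0 <= 0 by exact: hle.
have gy0 := nz y (connected_component_sub Cy).
have gx0 := nz x0 Sx0.
have [u Cu gu] : (g @` C) 0.
  have [lt|gt|eq] := ltgtP (g y) (g x0).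
  - apply: (I (g y) (g x0)); [by exists y|by exists x0|].
    by apply/andP; split; nra.
  - apply: (I (g x0) (g y)); [by exists x0|by exists y|].
    by apply/andP; split; nra.
  - exfalso; move: hle'; rewrite eq leNgt.
    by rewrite -expr2 lt_def sqrf_eq0 gx0 sqr_ge0.
by move: (nz u (connected_component_sub Cu)); rewrite gu eqxx.
Qed.

Lemma final (R : realType) (Ev Ew Hv Hw Be Bh : R) :
  0 < Ev -> 0 < Ew -> 0 < Hv -> 0 < Hw -> 0 < Be -> Ev * Ew <= Be ^+ 2 ->
  0 < Bh -> Hv * Hw <= Bh ^+ 2 ->
  (Ew * Hw) `^ (4%:R^-1) / (Ev * Hv) `^ (4%:R^-1) <= (Be / Ev + Bh / Hv) / 2.
Proof.
move=> hEv hEw hHv hHw hBe hE hBh hH.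
set a := Be / Ev; set b := Bh / Hv; set y := (a + b) / 2.
have Bea : Be = a * Ev by rewrite /a divfK // gt_eqF.
have Bhb : Bh = b * Hv by rewrite /b divfK // gt_eqF.
have ha0 : 0 < a by rewrite /a divr_gt0.
have hb0 : 0 < b by rewrite /b divr_gt0.
have hy0 : 0 < y by rewrite /y; apply: divr_gt0 => //; exact: addr_gt0.
have ha : Ew <= a ^+ 2 * Ev.
  move: hE; rewrite Bea => hE; nra.
have hb : Hw <= b ^+ 2 * Hv.
  move: hH; rewrite Bhb => hH; nra.
have hab : a * b <= y ^+ 2.
  rewrite /y; have := sqr_ge0 (a - b); nra.
have hab0 : 0 <= a * b by apply: mulr_ge0; exact: ltW.
have hab2 : (a * b) ^+ 2 <= y ^+ 4.
  have -> : y ^+ 4 = (y ^+ 2) ^+ 2 by rewrite -exprM.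
  by rewrite ler_pXn2r // nnegrE // (le_trans hab0 hab).
have hEH : 0 < Ev * Hv by exact: mulr_gt0.
have key : Ew * Hw <= y ^+ 4 * (Ev * Hv).
  apply: (le_trans (y := (a ^+ 2 * Ev) * (b ^+ 2 * Hv))).
    by apply: ler_pM => //; exact: ltW.
  have -> : a ^+ 2 * Ev * (b ^+ 2 * Hv) = (a * b) ^+ 2 * (Ev * Hv) by ring.
  by apply: ler_wpM2r => //; exact: ltW.
have hFv : 0 < (Ev * Hv) `^ (4%:R^-1) by rewrite powR_gt0.
rewrite ler_pdivrMr //.
have -> : y = (y ^+ 4) `^ (4%:R^-1).
  rewrite -powR_mulrn; last exact: ltW.
  by rewrite -powRrM mulfV ?powRr1 ?pnatr_eq0 //; exact: ltW.
have hy4 : 0 <= y ^+ 4 by rewrite exprn_ge0 // ltW.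
rewrite -powRM //; last exact: ltW.
apply: ge0_ler_powR => //.
- by rewrite nnegrE mulr_ge0 // ltW.
- by rewrite nnegrE mulr_ge0 // ltW.
Qed.

Theorem mainTheorem9 (R : realType) (n : nat) (H : 'M[R]_n.+1)
  (x0 : 'rV[R]_n.+1) :
  lorentzian H ->
  0 < bform H x0 x0 ->
  let C := @connected_component ('rV[R]_n.+1 : topologicalType) [set v | 0 < bform H v v] x0 in
  Tset C !=set0 ->
  forall v w, Tset C v -> Tset C w ->
    (etaL w v / etaL v v + bform H w v / bform H v v) / 2
      >= Ffun H w / Ffun H v.
Proof.
move=> [_ [P [_ ->]]] _ C _ v w [[ev v0] Cv] [[ew w0] Cw].
have hv := connected_component_sub Cv.
have hw := connected_component_sub Cw.
have sv := @comp_sign R n P x0 v Cv; have sw := @comp_sign R n P x0 w Cw.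
move: hv hw; rewrite /Ffun /= !bform_eta => hv hw.
have [e1 e2] := @revCS R n v w ev ew (mulr_gt0 v0 w0).
have sgn : 0 < (v *m P^T) 0 0 * (w *m P^T) 0 0 by nra.
have [h1 h2] := @revCS R n _ _ hv hw sgn.
rewrite (@etaC _ _ w v) (@etaC _ _ (w *m P^T)).
exact: final.
Qed.
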